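(* Let $\mathcal{T}^X$ be a stable projective tree of spheres marked by a finite set $X$, let $v$ and $v'$ be two distinct internal vertices of $T^X$, and let $(x_n)_n$ be a sequence of spheres marked by $X$ converging to $\mathcal{T}^X$ via isomorphisms $(\phi_n)_n$. Then the sequence of isomorphisms $\phi_{n,v'}\circ\phi_{n,v}^{-1}:\mathbb{S}_v\to\mathbb{S}_{v'}$ converges locally uniformly on $\mathbb{S}_v\setminus\{i_v(v')\}$ to the constant map with value $i_{v'}(v)$.
   Context: A tree is a finite connected graph without cycles (vertices $V$, edges $2$-element subsets of $V$, $E_v$ the set of edges containing $v$); leaves are valence-$1$ vertices, others internal; stable means every internal vertex has valence $\ge3$. For a vertex $v$ and $e\in E_v$, $B_v(e)$ is the connected component of the tree minus $v$ containing $e$. A projective tree of spheres $\mathcal{T}^X$ marked by a finite set $X$ ($\ge3$ elements) consists of a tree $T^X$ whose set of leaves is $X$ and, for each internal vertex $v$, a sphere $\mathbb{S}_v$ with a projective (complex) structure (a class of homeomorphisms to $\hat{\mathbb{C}}$ modulo Möbius transformations) and an injection $i_v:E_v\to\mathbb{S}_v$; for a vertex $v'\ne v$, $i_v(v'):=i_v(e)$ where $v'\in B_v(e)$; $a_v:X\to\mathbb{S}_v$ is $a_v(x)=i_v(x)$. A sphere marked by $X$ is an injection $x:X\to\hat{\mathbb{C}}$. A sequence $x_n$ converges to $\mathcal{T}^X$ via $(\phi_n)$ if for every internal vertex $v$ there are projective isomorphisms $\phi_{n,v}:\hat{\mathbb{C}}\to\mathbb{S}_v$ with $\phi_{n,v}\circ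 x_n\to a_v$ pointwise on $X$. *)

(* Defs.v *)
From HB Require Import structures.
From mathcomp Require Import all_boot all_algebra reals complex.
Set Implicit Arguments. Unset Strict Implicit. Unset Printing Implicit Defensive.
Import GRing.Theory Num.Theory.
Local Open Scope ring_scope.

(* [None] is the point at infinity. *)
Definition sphere (R : realType) := option R[i].

Definition sqmod (R : realType) (z : R[i]) : R :=
  complex.Re z ^+ 2 + complex.Im z ^+ 2.

(* chordal distance on \hat C (it induces the standard topology / uniform
   structure of the Riemann sphere) *)
Definition chord (R : realType) (z w : sphere R) : R :=
  match z, w with
  | Some a, Some b =>
      2 * Num.sqrt (sqmod (a - b)) /
      (Num.sqrt (1 + sqmod a) * Num.sqrt (1 + sqmod b))
  | Some a, None | None, Some a => 2 / Num.sqrt (1 + sqmod a)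
  | None, None => 0
  end.

Record moebius (R : realType) := Moebius {
  mob_a : R[i]; mob_b : R[i]; mob_c : R[i]; mob_d : R[i];
  mob_det : mob_a * mob_d - mob_b * mob_c != 0 }.

Definition mob_apply (R : realType) (m : moebius R) (z : sphere R) : sphere R :=
  let: Moebius a b c d _ := m in
  match z with
  | Some z => if c * z + d == 0 then None else Some ((a * z + b) / (c * z + d))
  | None => if c == 0 then None else Some (a / c)
  end.

Lemma mob_inv_det (R : realType) (m : moebius R) :
  mob_d m * mob_a m - (- mob_b m) * (- mob_c m) != 0.
Proof.
case: m => a b c d H /=. by rewrite mulrNN mulrC.
Qed.

Definition mob_inv (R : realType) (m : moebius R) : moebius R :=
  @Moebius R (mob_d m) (- mob_b m) (- mob_c m) (mob_a m) (mob_inv_det m).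

Definition simple_graph (V : finType) (e : rel V) : Prop :=
  symmetric e /\ irreflexive e.

Definition connected_graph (V : finType) (e : rel V) : Prop :=
  forall a b : V, connect e a b.

Definition acyclic_graph (V : finType) (e : rel V) : Prop :=
  forall p : seq V, uniq p -> (2 < size p)%N -> ~~ cycle e p.

Definition is_tree (V : finType) (e : rel V) : Prop :=
  [/\ simple_graph e, connected_graph e & acyclic_graph e].

Definition valence (V : finType) (e : rel V) (v : V) : nat := #|[set w | e v w]|.

Definition is_leaf (V : finType) (e : rel V) (v : V) : bool := valence e v == 1%N.
Definition is_internal (V : finType) (e : rel V) (v : V) : bool := ~~ is_leaf e v.

Definition stable_tree (V : finType) (e : rel V) : Prop :=
  forall v, is_internal e v -> (3 <= valence e v)%N.

Definition rel_minus (V : finType) (e : rel V) (v : V) : rel V :=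
  [rel a b | [&& e a b, a != v & b != v]].

(* v' lies in B_v(e), the component of T - v containing the edge {v, w}
   (w a neighbour of v). *)
Definition in_branch (V : finType) (e : rel V) (v w v' : V) : bool :=
  e v w && connect (rel_minus e v) w v'.

(* The marking set X is the set of leaves of the tree.  Each internal vertex v
   carries the sphere S_v, identified with \hat C (with its standard projective
   structure), and an injection i_v : E_v -> S_v, encoded as
   [i v w] for the edge {v, w}. *)
Definition edge_injections (R : realType) (V : finType) (e : rel V)
    (i : V -> V -> sphere R) : Prop :=
  forall v, is_internal e v ->
    forall w1 w2, e v w1 -> e v w2 -> i v w1 = i v w2 -> w1 = w2.

(* i_v(v') := i_v(edge) where v' lies in B_v(edge) *)
Definition ext_i (R : realType) (V : finType) (e : rel V)
    (i : V -> V -> sphere R) (v v' : V) : sphere R :=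
  match [pick w | in_branch e v w v'] with
  | Some w => i v w
  | None => None
  end.

(* a sphere marked by X: an injection X -> \hat C, encoded as a map on V that
   is injective on the leaves (values off X are irrelevant) *)
Definition marked_sphere (R : realType) (V : finType) (e : rel V)
    (x : V -> sphere R) : Prop :=
  forall a b, is_leaf e a -> is_leaf e b -> x a = x b -> a = b.

Definition sph_cvg (R : realType) (u : nat -> sphere R) (l : sphere R) : Prop :=
  forall eps : R, 0 < eps -> exists N : nat, forall n, (N <= n)%N -> chord (u n) l < eps.

Definition converges_via (R : realType) (V : finType) (e : rel V)
    (i : V -> V -> sphere R) (x : nat -> V -> sphere R)
    (phi : nat -> V -> moebius R) : Prop :=
  forall v, is_internal e v -> forall a, is_leaf e a ->
    sph_cvg (fun n => mob_apply (phi n v) (x n a)) (ext_i e i v a).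

Definition loc_unif_cvg_const (R : realType) (f : nat -> sphere R -> sphere R)
    (p c : sphere R) : Prop :=
  forall z, z <> p -> exists2 r : R, 0 < r &
    forall eps : R, 0 < eps -> exists N : nat, forall n, (N <= n)%N ->
      forall w, w <> p -> chord w z < r -> chord (f n w) c < eps.

(* Main.v *)
Require Import Defs.
From HB Require Import structures.
From mathcomp Require Import all_boot all_order all_algebra reals complex ring lra zify.
Import Order.TTheory GRing.Theory Num.Theory.
Set Implicit Arguments. Unset Strict Implicit. Unset Printing Implicit Defensive.
Local Open Scope ring_scope.

Lemma tri3 (R : realType) (s1 s2 s3 a1 a2 a3 b1 b2 b3 c1 c2 c3 : R) :
  0 <= s1 -> 0 <= s2 -> 0 <= s3 ->
  s1 ^+ 2 = (a1 - b1)^+2 + (a2 - b2)^+2 + (a3 - b3)^+2 ->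
  s2 ^+ 2 = (b1 - c1)^+2 + (b2 - c2)^+2 + (b3 - c3)^+2 ->
  s3 ^+ 2 = (a1 - c1)^+2 + (a2 - c2)^+2 + (a3 - c3)^+2 ->
  s3 <= s1 + s2.
Proof.
move=> h1 h2 h3 e1 e2 e3.
set X1 := a1 - b1; set X2 := a2 - b2; set X3 := a3 - b3.
set Y1 := b1 - c1; set Y2 := b2 - c2; set Y3 := b3 - c3.
have e3' : s3 ^+ 2 = s1^+2 + s2^+2 + 2 * (X1*Y1 + X2*Y2 + X3*Y3).
  rewrite e1 e2 e3 /X1 /X2 /X3 /Y1 /Y2 /Y3; ring.
have cs : (X1*Y1 + X2*Y2 + X3*Y3)^+2 <= s1^+2 * s2^+2.
  rewrite e1 e2 -/X1 -/X2 -/X3 -/Y1 -/Y2 -/Y3.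
  have -> : (X1^+2 + X2^+2 + X3^+2) * (Y1^+2 + Y2^+2 + Y3^+2) =
    (X1*Y1 + X2*Y2 + X3*Y3)^+2 + ((X1*Y2-X2*Y1)^+2 + (X1*Y3-X3*Y1)^+2 + (X2*Y3-X3*Y2)^+2) by ring.
  by rewrite lerDl !addr_ge0 // sqr_ge0.
have hP : X1*Y1 + X2*Y2 + X3*Y3 <= s1 * s2.
  have hs : 0 <= s1 * s2 by rewrite mulr_ge0.
  rewrite -exprMn in cs.
  case: (lerP (X1*Y1 + X2*Y2 + X3*Y3) 0) => hp; first exact: le_trans hp hs.
  by rewrite -(ler_pXn2r (n:=2)) // ?nnegrE // ltW.
have : s3 ^+ 2 <= (s1 + s2) ^+ 2 by rewrite e3'; nra.
by rewrite ler_pXn2r // ?nnegrE // addr_ge0.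
Qed.

Section Chord.
Variable R : realType.
Local Notation sph := (sphere R).

Lemma sqmod_ge0 (u : R[i]) : 0 <= sqmod u.
Proof. by rewrite /sqmod addr_ge0 // sqr_ge0. Qed.

Lemma sqmodM (u w : R[i]) : sqmod (u * w) = sqmod u * sqmod w.
Proof. case: u => a b; case: w => c d. rewrite /sqmod /=. ring. Qed.

Lemma sqmod_eq0 (u : R[i]) : sqmod u = 0 -> u = 0.
Proof.
case: u => a b; rewrite /sqmod /= => H.
have ha : a = 0 by apply/eqP; rewrite -sqrf_eq0; apply/eqP; nra.
have hb : b = 0 by apply/eqP; rewrite -sqrf_eq0; apply/eqP; nra.
by rewrite ha hb.
Qed.

Lemma sqmod_gt0 (u : R[i]) : u != 0 -> 0 < sqmod u.
Proof.
move=> hu; rewrite lt_neqAle sqmod_ge0 andbT; apply/eqP => h.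
by move/eqP: hu; apply; apply: sqmod_eq0.
Qed.

Definition hom (z : sph) : R[i] * R[i] :=
  match z with Some a => (a, 1) | None => (1, 0) end.
Definition cr (p q : R[i] * R[i]) := p.1 * q.2 - p.2 * q.1.
Definition nrm2 (p : R[i] * R[i]) := sqmod p.1 + sqmod p.2.

Lemma sqmod1 : sqmod (1 : R[i]) = 1.
Proof. by rewrite /sqmod /= expr0n /= addr0 expr1n. Qed.
Lemma sqmod0 : sqmod (0 : R[i]) = 0.
Proof. by rewrite /sqmod /= expr0n /= addr0. Qed.

Lemma sqmodN (u : R[i]) : sqmod (- u) = sqmod u.
Proof. case: u => a b; rewrite /sqmod /=; ring. Qed.

Lemma nrm2_hom_gt0 z : 0 < nrm2 (hom z).
Proof.
case: z => [a|]; rewrite /nrm2 /= ?sqmod1 ?sqmod0.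
  by apply: (lt_le_trans ltr01); rewrite lerDr sqmod_ge0.
by rewrite addr0 ltr01.
Qed.

Lemma chord_ge0 (z w : sph) : 0 <= chord z w.
Proof.
case: z => [a|]; case: w => [b|] //=;
  by rewrite ?mulr_ge0 ?invr_ge0 ?sqrtr_ge0 ?mulr_ge0 ?sqrtr_ge0.
Qed.

Lemma chord2 (z w : sph) : chord z w ^+ 2 =
  4 * sqmod (cr (hom z) (hom w)) / (nrm2 (hom z) * nrm2 (hom w)).
Proof.
have s2 : forall y : R, 0 <= y -> Num.sqrt y ^+ 2 = y by move=> y; apply: sqr_sqrtr.
have g1 : forall a : R[i], 0 < 1 + sqmod a.
  by move=> a; apply: (lt_le_trans ltr01); rewrite lerDl sqmod_ge0.
case: z => [a|]; case: w => [b|]; rewrite /= /cr /nrm2 /= ?sqmod1 ?sqmod0 ?mulr1 ?mul1r ?mulr0 ?mul0r.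
all: rewrite ?(exprMn, exprVn) ?s2 ?sqmod_ge0 ?(ltW (g1 _)) //.
- rewrite [sqmod a + 1]addrC [sqmod b + 1]addrC; field.
  by rewrite !gt_eqF ?g1.
  rewrite sub0r sqmodN sqmod1 addr0 [sqmod a + 1]addrC; field.
  by rewrite gt_eqF ?g1.
- rewrite subr0 sqmod1 addr0 [sqmod b + 1]addrC; field.
  by rewrite gt_eqF ?g1.
- by rewrite subr0 sqmod0 expr0n /= !mulr0 mul0r.
Qed.

Definition st1 (z : sph) : R :=
  if z is Some a then 2 * complex.Re a / (1 + sqmod a) else 0.
Definition st2 (z : sph) : R :=
  if z is Some a then 2 * complex.Im a / (1 + sqmod a) else 0.
Definition st3 (z : sph) : R :=
  if z is Some a then (sqmod a - 1) / (1 + sqmod a) else 1.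

Lemma chord_st (z w : sph) : chord z w ^+ 2 =
  (st1 z - st1 w) ^+ 2 + (st2 z - st2 w) ^+ 2 + (st3 z - st3 w) ^+ 2.
Proof.
rewrite chord2.
have g1 : forall a b : R, 1 + (a ^+ 2 + b ^+ 2) != 0.
  move=> a b; rewrite gt_eqF //; apply: (lt_le_trans ltr01).
  by rewrite lerDl addr_ge0 // sqr_ge0.
case: z => [[x1 y1]|]; case: w => [[x2 y2]|];
  rewrite /cr /nrm2 /st1 /st2 /st3 /sqmod /=.
- rewrite !expr1n !expr0n /= !addr0.
  field. by rewrite !g1.
- rewrite !expr1n !expr0n /= !addr0.
  field. by rewrite !g1.
- rewrite !expr1n !expr0n /= !addr0.
  field. by rewrite !g1.
- by rewrite !expr1n !expr0n /=; field.
Qed.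

Lemma st_norm (z : sph) : st1 z ^+ 2 + st2 z ^+ 2 + st3 z ^+ 2 = 1.
Proof.
have g1 : forall a b : R, 1 + (a ^+ 2 + b ^+ 2) != 0.
  move=> a b; rewrite gt_eqF //; apply: (lt_le_trans ltr01).
  by rewrite lerDl addr_ge0 // sqr_ge0.
case: z => [[x1 y1]|]; rewrite /st1 /st2 /st3 /sqmod /=.
  field. by rewrite g1.
by rewrite expr0n expr1n /= !add0r.
Qed.

Lemma chord_triangle (z w u : sph) : chord z u <= chord z w + chord w u.
Proof.
exact: (@tri3 R _ _ _ _ _ _ _ _ _ _ _ _ (chord_ge0 z w) (chord_ge0 w u) (chord_ge0 z u)
  (chord_st z w) (chord_st w u) (chord_st z u)).
Qed.

Lemma chord_le2 (z w : sph) : chord z w <= 2.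
Proof.
have h := chord_st z w; have n1 := st_norm z; have n2 := st_norm w.
have : chord z w ^+ 2 <= 2 ^+ 2.
  rewrite h.
  set a1 := st1 z in n1 *; set a2 := st2 z in n1 *; set a3 := st3 z in n1 *.
  set b1 := st1 w in n2 *; set b2 := st2 w in n2 *; set b3 := st3 w in n2 *.
  have -> : (2 : R) ^+ 2 = (a1 - b1) ^+ 2 + (a2 - b2) ^+ 2 + (a3 - b3) ^+ 2 +
    ((a1 + b1) ^+ 2 + (a2 + b2) ^+ 2 + (a3 + b3) ^+ 2).
    have -> : (2 : R) ^+ 2 = 2 * (a1 ^+ 2 + a2 ^+ 2 + a3 ^+ 2) + 2 * (b1 ^+ 2 + b2 ^+ 2 + b3 ^+ 2).
      by rewrite n1 n2; ring.
    ring.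
  by rewrite lerDl !addr_ge0 // sqr_ge0.
by rewrite ler_pXn2r // ?nnegrE ?chord_ge0.
Qed.

Lemma chord_sym (z w : sph) : chord z w = chord w z.
Proof.
apply/eqP; rewrite -(eqrXn2 (n := 2)) ?chord_ge0 //.
by rewrite !chord_st; apply/eqP; ring.
Qed.

Lemma chord_refl (z : sph) : chord z z = 0.
Proof.
apply/eqP; rewrite -sqrf_eq0 chord_st !subrr expr0n /= !addr0 //.
Qed.

Lemma chord_eq0 (z w : sph) : chord z w = 0 -> z = w.
Proof.
move=> h; have : chord z w ^+ 2 = 0 by rewrite h expr0n.
clear h.
rewrite chord2 => /eqP; rewrite !mulf_eq0 invr_eq0 => /orP[/orP[h4|/eqP]|hn].
- by move/eqP: h4 => h4; exfalso; lra.
- move/sqmod_eq0.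
  case: z => [a|]; case: w => [b|]; rewrite /cr /= ?mulr1 ?mul1r ?mulr0 ?mul0r.
  + by move/eqP; rewrite subr_eq0 => /eqP ->.
  + by move/eqP; rewrite sub0r oppr_eq0 oner_eq0.
  + by move/eqP; rewrite subr0 oner_eq0.
  + by [].
- by move: hn; rewrite mulf_eq0 !gt_eqF ?nrm2_hom_gt0.
Qed.
End Chord.

Section Mob.
Variable R : realType.
Local Notation sph := (sphere R).

Definition Lm (m : moebius R) (p : R[i] * R[i]) :=
  (mob_a m * p.1 + mob_b m * p.2, mob_c m * p.1 + mob_d m * p.2).
Definition detm (m : moebius R) := mob_a m * mob_d m - mob_b m * mob_c m.

Lemma mob_hom m z : exists2 l : R[i], l != 0 &
  hom (mob_apply m z) = (l * (Lm m (hom z)).1, l * (Lm m (hom z)).2).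
Proof.
case: m => a b c d H; case: z => [z|] /=; rewrite /Lm /=.
- case: eqP => hcz.
  + have hab : a * z + b != 0.
      apply: contra H => /eqP hab.
      have -> : b = - (a * z) by rewrite -(addKr (a * z) b) hab addr0.
      have -> : d = - (c * z) by rewrite -(addKr (c * z) d) hcz addr0.
      apply/eqP; ring.
    exists (a * z + b)^-1; first by rewrite invr_eq0.
    by rewrite /= !mulr1 hcz mulr0 mulVf.
  + exists (c * z + d)^-1; first by rewrite invr_eq0; apply/eqP.
    rewrite /= !mulr1 mulVf; last by apply/eqP.
    by rewrite mulrC.
- case: eqP => hc.
  + have ha : a != 0 by apply: contra H => /eqP ->; rewrite hc !mul0r mulr0 subrr.
    exists a^-1; first by rewrite invr_eq0.
    by rewrite /hom /= !mulr1 !mulr0 !addr0 hc mulr0 mulVf.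
  + exists c^-1; first by rewrite invr_eq0; apply/eqP.
    rewrite /hom /= !mulr1 !mulr0 !addr0 mulVf; last by apply/eqP.
    by rewrite mulrC.
Qed.

Lemma hom_inj (u w : sph) l : l != 0 ->
  hom u = (l * (hom w).1, l * (hom w).2) -> u = w.
Proof.
move=> hl; case: u => [a|]; case: w => [b|]; rewrite /hom /= => -[e1 e2].
- by move: e2; rewrite mulr1 => e2; rewrite e1 -e2 mul1r.
- by move/eqP: e2; rewrite mulr0 oner_eq0.
- by move/esym/eqP: e2; rewrite mulr1 (negbTE hl).
- by [].
Qed.

Lemma mob_invK (m : moebius R) w : mob_apply m (mob_apply (mob_inv m) w) = w.
Proof.
have [l1 hl1 e1] := mob_hom (mob_inv m) w.
have [l2 hl2 e2] := mob_hom m (mob_apply (mob_inv m) w).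
apply: (@hom_inj _ _ (l2 * l1 * detm m)).
  by rewrite !mulf_neq0 //; case: m {e1 e2} => a b c d H.
rewrite e2 e1 /Lm /detm; case: m {e1 e2} => a b c d H /=.
congr (_, _); ring.
Qed.


Definition kf (m : moebius R) (z : sph) := nrm2 (hom z) / nrm2 (Lm m (hom z)).

Lemma nrm2_scale l (p : R[i] * R[i]) : nrm2 (l * p.1, l * p.2) = sqmod l * nrm2 p.
Proof. by rewrite /nrm2 /= !sqmodM -mulrDr. Qed.

Lemma Lm_gt0 m z : 0 < nrm2 (Lm m (hom z)).
Proof.
have [l hl e] := mob_hom m z.
have := nrm2_hom_gt0 (mob_apply m z); rewrite e nrm2_scale.
by rewrite pmulr_rgt0 // sqmod_gt0.
Qed.

Lemma kf_gt0 m z : 0 < kf m z.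
Proof. by rewrite /kf divr_gt0 ?nrm2_hom_gt0 ?Lm_gt0. Qed.

Lemma detm_gt0 m : 0 < sqmod (detm m).
Proof. by apply: sqmod_gt0; case: m. Qed.

Lemma mob_conf m z w : chord (mob_apply m z) (mob_apply m w) ^+ 2 =
  sqmod (detm m) * kf m z * kf m w * chord z w ^+ 2.
Proof.
have [l1 hl1 e1] := mob_hom m z.
have [l2 hl2 e2] := mob_hom m w.
have g1 := Lm_gt0 m z; have g2 := Lm_gt0 m w.
have n1 := nrm2_hom_gt0 z; have n2 := nrm2_hom_gt0 w.
have s1 := sqmod_gt0 hl1; have s2 := sqmod_gt0 hl2.
rewrite !chord2 e1 e2 !nrm2_scale.
have -> : cr (l1 * (Lm m (hom z)).1, l1 * (Lm m (hom z)).2)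
     (l2 * (Lm m (hom w)).1, l2 * (Lm m (hom w)).2) = l1 * l2 * detm m * cr (hom z) (hom w).
  by rewrite /cr /Lm /detm /=; ring.
rewrite !sqmodM /kf; field.
by rewrite !gt_eqF.
Qed.

End Mob.

Section Cross.
Variable R : realType.
Local Notation sph := (sphere R).

Lemma cross_id (f g : moebius R) (y ya yb yc : sph) :
  let T := mob_apply g y in let P := mob_apply g ya in
  let Q := mob_apply g yb in let Rr := mob_apply g yc in
  let w := mob_apply f y in let p := mob_apply f ya in
  let q := mob_apply f yb in let r := mob_apply f yc in
  chord T P * chord Q Rr * (chord w r * chord q p) =
  chord T Rr * chord Q P * (chord w p * chord q r).
Proof.
move=> T P Q Rr w p q r.
apply/eqP; rewrite -(eqrXn2 (n := 2)) //; last first.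
- by rewrite !mulr_ge0 ?chord_ge0.
- by rewrite !mulr_ge0 ?chord_ge0.
rewrite !exprMn /T /P /Q /Rr /w /p /q /r !mob_conf.
apply/eqP; ring.
Qed.
End Cross.

Section Analytic.
Variable R : realType.
Local Notation sph := (sphere R).

Lemma chord_gt0 (z w : sph) : z <> w -> 0 < chord z w.
Proof.
move=> h; rewrite lt_neqAle chord_ge0 andbT; apply/eqP => /esym/chord_eq0; exact: h.
Qed.

Lemma analytic (f g : nat -> moebius R) (ya yb yc : nat -> sph) (al be ga de ep : sph) :
  al <> be -> de <> ep ->
  sph_cvg (fun n => mob_apply (f n) (ya n)) al ->
  sph_cvg (fun n => mob_apply (f n) (yb n)) be ->
  sph_cvg (fun n => mob_apply (f n) (yc n)) ga ->
  sph_cvg (fun n => mob_apply (g n) (ya n)) de ->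
  sph_cvg (fun n => mob_apply (g n) (yb n)) de ->
  sph_cvg (fun n => mob_apply (g n) (yc n)) ep ->
  loc_unif_cvg_const (fun n => mob_apply (g n) \o mob_apply (mob_inv (f n))) ga de.
Proof.
move=> hab hde ca cb cc Ca Cb Cc z hz.
set d0 := chord z ga.
have d0p : 0 < d0 by apply: chord_gt0.
exists (d0 / 2); first by rewrite divr_gt0.
move=> eps he.
set dab := chord al be; have dabp : 0 < dab by apply: chord_gt0.
set dde := chord de ep; have ddep : 0 < dde by apply: chord_gt0.
set K := dde * d0 * dab.
have Kp : 0 < K by rewrite !mulr_gt0.
have K8 : K <= 8.
  have := chord_le2 de ep; have := chord_le2 z ga; have := chord_le2 al be.
  rewrite -/dab -/d0 -/dde /K => h1 h2 h3.
  have : dde * d0 <= 2 * 2 by apply: ler_pM; rewrite ?chord_ge0.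
  move=> h4; have : dde * d0 * dab <= (2 * 2) * 2.
    by apply: ler_pM; rewrite ?mulr_ge0 ?chord_ge0.
  lra.
set eta := eps * K / 512.
have etap : 0 < eta by rewrite /eta divr_gt0 ?mulr_gt0.
have [Na Ha] := ca (dab / 4) ltac:(by rewrite divr_gt0).
have [Nb Hb] := cb (dab / 4) ltac:(by rewrite divr_gt0).
have [Nc Hc] := cc (d0 / 4) ltac:(by rewrite divr_gt0).
have [NA HA] := Ca eta etap.
have [NB1 HB1] := Cb (dde / 4) ltac:(by rewrite divr_gt0).
have [NB2 HB2] := Cb eta etap.
have [NC HC] := Cc (dde / 4) ltac:(by rewrite divr_gt0).
exists (Na + Nb + Nc + NA + NB1 + NB2 + NC)%N => n hn w hw hwz.
have := Ha n ltac:(lia); have := Hb n ltac:(lia); have := Hc n ltac:(lia).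
have := HA n ltac:(lia); have := HB1 n ltac:(lia); have := HB2 n ltac:(lia).
have := HC n ltac:(lia).
move=> {Ha Hb Hc HA HB1 HB2 HC}.
have cid := cross_id (f n) (g n) (mob_apply (mob_inv (f n)) w) (ya n) (yb n) (yc n).
rewrite /= mob_invK in cid *.
set T := mob_apply (g n) (mob_apply (mob_inv (f n)) w) in cid *.
set P := mob_apply (g n) (ya n) in cid *.
set Q := mob_apply (g n) (yb n) in cid *.
set Rr := mob_apply (g n) (yc n) in cid *.
set p := mob_apply (f n) (ya n) in cid *.
set q := mob_apply (f n) (yb n) in cid *.
set r := mob_apply (f n) (yc n) in cid *.
move=> hC hB2 hB1 hA hc hb ha.
have hQR : dde / 2 <= chord Q Rr.
  have t1 := chord_triangle de Q ep; have t2 := chord_triangle Q Rr ep.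
  rewrite (chord_sym de Q) -/dde in t1; lra.
have hqp : dab / 2 <= chord q p.
  have t1 := chord_triangle al p be; have t2 := chord_triangle p q be.
  rewrite (chord_sym al p) (chord_sym p q) -/dab in t1 t2; lra.
have hwr : d0 / 4 <= chord w r.
  have t1 := chord_triangle z w ga; have t2 := chord_triangle w r ga.
  rewrite (chord_sym z w) -/d0 in t1; lra.
have hQP : chord Q P < 2 * eta.
  have t1 := chord_triangle Q de P; rewrite (chord_sym de P) in t1; lra.
have lo : chord T P * K / 16 <= chord T P * chord Q Rr * (chord w r * chord q p).
  have -> : chord T P * K / 16 = chord T P * (dde / 2) * (d0 / 4 * (dab / 2)) by rewrite /K; field.
  apply: ler_pM; rewrite ?invr_ge0 ?ler0n ?mulr_ge0 ?chord_ge0 ?divr_ge0 ?(ltW ddep) ?(ltW d0p) ?(ltW dabp) ?invr_ge0 ?ler0n //.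
    by apply: ler_pM; rewrite ?invr_ge0 ?ler0n ?chord_ge0 ?divr_ge0 ?(ltW ddep) //.
  by apply: ler_pM; rewrite ?invr_ge0 ?ler0n ?chord_ge0 ?divr_ge0 ?(ltW dabp) ?(ltW d0p).
have hi : chord T Rr * chord Q P * (chord w p * chord q r) <= 2 * chord Q P * (2 * 2).
  apply: ler_pM; rewrite ?mulr_ge0 ?chord_ge0 //.
    by apply: ler_pM; rewrite ?chord_ge0 ?chord_le2.
  by apply: ler_pM; rewrite ?chord_ge0 ?chord_le2.
have tP : chord T P < eps / 2.
  have : chord T P * K / 16 < eps * K / 32.
    rewrite cid in lo; apply: (le_lt_trans lo); apply: (le_lt_trans hi).
    move: hQP; rewrite /eta => hQP; lra.
  move=> h; have : chord T P * K < eps / 2 * K by lra.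
  by rewrite ltr_pM2r.
have t1 := chord_triangle T P de.
have : eta <= eps / 2 by rewrite /eta; nra.
lra.
Qed.
End Analytic.
Section Comb.
Variables (V : finType) (e : rel V).
Hypothesis tree : is_tree e.

Local Notation C x := (connect (rel_minus e x)).

Lemma esym : symmetric e. Proof. by case: tree => [[]]. Qed.
Lemma eirr : irreflexive e. Proof. by case: tree => [[]]. Qed.
Lemma econn : connected_graph e. Proof. by case: tree. Qed.
Lemma eacyc : acyclic_graph e. Proof. by case: tree. Qed.

Lemma Csym x a b : C x a b = C x b a.
Proof.
have hs : symmetric (rel_minus e x).
  by move=> p q; rewrite /rel_minus /= esym; case: (e q p) => //=; rewrite andbC.
exact: (sym_connect_sym hs).
Qed.

Lemma Ctrans x a b c : C x a b -> C x b c -> C x a c.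
Proof. exact: connect_trans. Qed.

Lemma rm_edge x a b : e a b -> a != x -> b != x -> C x a b.
Proof. by move=> h1 h2 h3; apply: connect1; rewrite /rel_minus /= h1 h2 h3. Qed.

Lemma C_self x y : C x x y -> y = x.
Proof.
case/connectP => [[|c p]] /=; first by move=> _ ->.
by rewrite /rel_minus /= eqxx andbF.
Qed.

Lemma path_rm_all x a p : path (rel_minus e x) a p -> all (fun t => t != x) p.
Proof.
elim: p a => [|b p IH] a //=.
by case/andP => /and3P[_ _ hb] /IH ->; rewrite hb.
Qed.

Lemma path_rm_e x a p : path (rel_minus e x) a p -> path e a p.
Proof. by apply: sub_path => p1 p2 /and3P[]. Qed.

Lemma path_e_rm x a p : path e a p -> all (fun t => t != x) (a :: p) ->
  path (rel_minus e x) a p.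
Proof.
elim: p a => [|b p IH] a //= /andP[hab hp] /and3P[ha hb hall].
by rewrite /rel_minus /= hab ha hb /=; apply: IH => //=; rewrite hb.
Qed.

Lemma U x y1 y2 : e x y1 -> e x y2 -> y1 != y2 -> ~~ C x y1 y2.
Proof.
move=> h1 h2 hne; apply/negP => /connectP [p hp hlast].
case: (shortenP hp) hlast => p' hp' hu _ hl.
have hall := path_rm_all hp'.
have hy1 : y1 != x by apply: contraTneq h1 => ->; rewrite eirr.
have : ~~ cycle e (x :: y1 :: p').
  apply: eacyc.
  - rewrite cons_uniq hu andbT inE negb_or eq_sym hy1 /=.
    by apply/negP => hx; move/allP: hall => /(_ x hx); rewrite eqxx.
  - by case: p' {hp hall hu} hp' hl => [|? ?] //= _ hl; move: hne; rewrite hl eqxx.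
rewrite /cycle /= rcons_path h1 (path_rm_e hp') /= -hl esym h2.
by [].
Qed.

Lemma Ex x y : y != x -> exists w, e x w && C x w y.
Proof.
move=> hy; have := econn y x; case/connectP => p hp hl.
elim: p y hy hp hl => [|b p IH] y hy /=; first by move=> _ hl; move: hy; rewrite hl eqxx.
case/andP => hyb hp hl.
case: (eqVneq b x) => [hb|hb].
  by exists y; rewrite -hb esym hyb connect0.
have [w /andP[hw hwb]] := IH b hb hp hl.
exists w; rewrite hw /=; apply: Ctrans hwb _.
by rewrite Csym; apply: rm_edge.
Qed.

Lemma Lmv v v' a : a != v' -> v != v' -> ~~ C v a v' -> C v' a v.
Proof.
move=> ha hvv hC; have := econn a v; case/connectP => p hp hl.
elim: p a ha hC hp hl => [|b p IH] a ha hC /=; first by move=> _ ->; exact: connect0.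
case/andP => hab hp hl.
case: (eqVneq a v) => [->|hav]; first exact: connect0.
have hbv' : b != v'.
  apply: contra hC => /eqP hb; rewrite -hb; apply: rm_edge => //.
  by rewrite hb eq_sym.
have hCb : ~~ C v b v'.
  case: (eqVneq b v) => [hbv|hbv].
    apply/negP; rewrite hbv => /C_self hh; move: hvv; rewrite hh eqxx //.
  apply: contra hC => hh; apply: Ctrans hh; exact: rm_edge.
apply: Ctrans (IH b hbv' hCb hp hl); exact: rm_edge.
Qed.

Lemma Leaf x w : e x w -> exists a, is_leaf e a && C x w a.
Proof.
move=> hxw.
have hwx : w != x by apply: contraTneq hxw => ->; rewrite eirr.
suff : forall k y s, (#|V| - size s <= k)%N -> path e y s -> uniq (y :: s) ->
    x \in s -> C x w y -> y != x -> exists a, is_leaf e a && C x w a.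
  move=> H; apply: (H #|V| w [:: x]).
  - by rewrite leq_subr.
  - by rewrite /= esym hxw.
  - by rewrite /= inE hwx.
  - by rewrite inE eqxx.
  - exact: connect0.
  - by [].
elim=> [|k IH] y s hk hp hu hx hC hy.
- have : (#|y :: s| <= #|V|)%N by apply: max_card.
  move: hk; rewrite (card_uniqP hu) /=; lia.
- case hl: (is_leaf e y); first by exists y; rewrite hl.
  case: s hk hp hu hx => [|z0 s'] hk hp hu hx; first by rewrite in_nil in hx.
  move/andP: hp => [hyz0 hp'].
  pose N := [set z | e y z].
  case: (boolP [exists z, (z \in N) && (z \notin y :: z0 :: s')]) => [/existsP [z /andP[hzN hzs]]|hno].
    apply: (IH z (y :: z0 :: s')).
    + have : (#|y :: z0 :: s'| <= #|V|)%N by apply: max_card.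
      move: hk; rewrite (card_uniqP hu) /=; lia.
    + rewrite /= esym; move: hzN; rewrite inE => -> /=; by rewrite hyz0.
    + by rewrite cons_uniq hzs hu.
    + by move: hx; rewrite !inE => /orP[->|->]; rewrite ?orbT.
    + apply: Ctrans hC _; apply: rm_edge => //; first by move: hzN; rewrite inE.
      by apply: contra hzs => /eqP ->; move: hx; rewrite !inE => /orP[->|->]; rewrite ?orbT.
    + by apply: contra hzs => /eqP ->; move: hx; rewrite !inE => /orP[->|->]; rewrite ?orbT.
  have hz0N : z0 \in N by rewrite inE.
  have : (N :\ z0) != set0.
    rewrite -card_gt0; move: hl; rewrite /is_leaf /valence -/N (cardsD1 z0 N) hz0N.
    by case: #|N :\ z0|.
  case/set0Pn => z1; rewrite !inE => /andP[hz10 hz1].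
  have hz1s : z1 \in z0 :: s'.
    move/existsPn: hno => /(_ z1); rewrite inE hz1 /= negbK inE => /orP[/eqP hh|//].
    by move: hz1; rewrite hh eirr.
  have hne : z0 != z1 by rewrite eq_sym.
  exfalso; move/negP: (U hyz0 hz1 hne); apply.
  have hall : all (fun t => t != y) (z0 :: s').
    move: hu; rewrite cons_uniq => /andP[hn _]; apply/allP => t ht.
    by apply: contraNneq hn => <-.
  exact: (path_connect (path_e_rm hp' hall)).
Qed.

Lemma Core v u : is_internal e v -> stable_tree e -> u != v ->
  exists a b, [/\ is_leaf e a, is_leaf e b, ~~ C v a b, ~~ C v a u & ~~ C v b u].
Proof.
move=> hv hst hu; have h3 := hst v hv.
pose N := [set w | e v w].
pose N' := [set w | e v w && ~~ C v w u].
have hN' : (1 < #|N'|)%N.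
  case: (boolP [exists w, (w \in N) && C v w u]) => [/existsP [w0 /andP[hw0 hC0]]|hno].
  - have : N :\ w0 \subset N'.
      apply/subsetP => w; rewrite !inE => /andP[hne hw]; rewrite hw /=.
      have hw0e : e v w0 by move: hw0; rewrite inE.
      apply: contra (U hw hw0e hne) => hh.
      by apply: Ctrans hh _; rewrite Csym.
    move/subset_leq_card; move: h3; rewrite /valence -/N (cardsD1 w0 N) hw0; lia.
  - have : N \subset N'.
      apply/subsetP => w; rewrite !inE => hw; rewrite hw /=.
      by apply/negP => hh; move/existsPn: hno => /(_ w); rewrite inE hw hh.
    move/subset_leq_card; move: h3; rewrite /valence -/N; lia.
case/card_gt1P: hN' => w1 [w2 []]; rewrite !inE => /andP[h1 c1] /andP[h2 c2] h12.
have [a /andP[la ca]] := Leaf h1.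
have [b /andP[lb cb]] := Leaf h2.
exists a, b; split => //.
- apply: contra (U h1 h2 h12) => hh; apply: Ctrans ca _; apply: Ctrans hh _.
  by rewrite Csym.
- by apply: contra c1 => hh; apply: Ctrans ca hh.
- by apply: contra c2 => hh; apply: Ctrans cb hh.
Qed.

End Comb.

Section Final.
Variables (R : realType) (V : finType) (e : rel V).
Hypothesis tree : is_tree e.
Local Notation C x := (connect (rel_minus e x)).

Lemma ext_eq (i : V -> V -> sphere R) v x y : C v x y -> ext_i e i v x = ext_i e i v y.
Proof.
move=> h; rewrite /ext_i (@eq_pick _ _ (fun w => in_branch e v w y)) //.
move=> w; rewrite /in_branch; case: (e v w) => //=; apply/idP/idP => hh.
  exact: Ctrans hh h.
by apply: Ctrans hh _; rewrite Csym.
Qed.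

Lemma ext_neq (i : V -> V -> sphere R) v x y : edge_injections e i -> is_internal e v ->
  x != v -> y != v -> ~~ C v x y -> ext_i e i v x <> ext_i e i v y.
Proof.
move=> hinj hv hx hy hC; rewrite /ext_i.
case: pickP => [wx /andP[ex cx]|hn]; last first.
  by have [w hw] := Ex tree hx; move: (hn w); rewrite /in_branch hw.
case: pickP => [wy /andP[ey cy]|hn]; last first.
  by have [w hw] := Ex tree hy; move: (hn w); rewrite /in_branch hw.
move=> heq; have hw := hinj v hv wx wy ex ey heq; subst wy.
move/negP: hC; apply; apply: Ctrans _ cy; by rewrite Csym.
Qed.

End Final.

Lemma leaf_neq (V : finType) (e : rel V) a v : is_leaf e a -> is_internal e v -> a != v.
Proof. by move=> la hv; apply: contraTneq la => ->. Qed.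

Theorem lemma4p9 (R : realType) (V : finType) (e : rel V)
    (i : V -> V -> sphere R)
    (x : nat -> V -> sphere R) (phi : nat -> V -> moebius R) (v v' : V) :
  is_tree e ->
  stable_tree e ->
  (3 <= #|[set a | is_leaf e a]|)%N ->
  edge_injections e i ->
  (forall n, marked_sphere e (x n)) ->
  is_internal e v -> is_internal e v' -> v != v' ->
  converges_via e i x phi ->
  loc_unif_cvg_const
    (fun n => mob_apply (phi n v') \o mob_apply (mob_inv (phi n v)))
    (ext_i e i v v') (ext_i e i v' v).
Proof.
move=> tree hst _ hinj _ hv hv' hvv hcv.
have hv'v : v' != v by rewrite eq_sym.
have [a [b [la lb cab cav' cbv']]] := Core tree hv hst hv'v.
have [c [_ [lc _ _ ccv _]]] := Core tree hv' hst hvv.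
have hac := leaf_neq la hv; have hbc := leaf_neq lb hv.
have ha' := leaf_neq la hv'; have hb' := leaf_neq lb hv'.
have hcv0 := leaf_neq lc hv; have hc' := leaf_neq lc hv'.
have e1 : ext_i e i v' a = ext_i e i v' v by apply: (ext_eq tree); exact: (Lmv tree).
have e2 : ext_i e i v' b = ext_i e i v' v by apply: (ext_eq tree); exact: (Lmv tree).
have e3 : ext_i e i v c = ext_i e i v v' by apply: (ext_eq tree); exact: (Lmv tree).
have n1 : ext_i e i v a <> ext_i e i v b by apply: (ext_neq tree).
have n2 : ext_i e i v' v <> ext_i e i v' c.
  move=> hh; have := ext_neq tree hinj hv' hc' hvv ccv; apply.
  by rewrite hh.
have := hcv v hv a la; have := hcv v hv b lb; have := hcv v hv c lc.
have := hcv v' hv' a la; have := hcv v' hv' b lb; have := hcv v' hv' c lc.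
rewrite e1 e2 e3 => Cc Cb Ca cc cb ca.
exact: (analytic n1 n2 ca cb cc Ca Cb Cc).
Qed.
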